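(* Let $(x_k)_{k\ge0}$ be indeterminates, define $a_n=x_n$ if $n=2^k-1$ for some integer $k\ge0$ and $a_n=0$ otherwise, let $D(n)=\det\left(a_{i+j+1}\right)_{i,j=0}^{n-1}$ with $D(0)=1$, and let $T_n=\frac{D(n)D(n+2)}{D(n+1)^2}$ (in the field of rational functions). Then for all integers $k\ge1$, $n\ge0$ and $j\in\{0,1\}$, $$T_{2^{k+1}n+2^k-2+j}=(-1)^nT_{2^k-2+j}.$$
   Context: Each $D(n)$ is a nonzero polynomial, so $T_n$ is well defined. *)

(* Defs.v *)
From HB Require Import structures.
From mathcomp Require Import all_boot all_order all_algebra.
From mathcomp Require Import fraction.
From mathcomp Require Import mpoly.
Set Implicit Arguments. Unset Strict Implicit. Unset Printing Implicit Defensive.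
Import GRing.Theory.
Local Open Scope ring_scope.

(* n is of the form 2^k - 1 for some k >= 0 (k is necessarily <= n+1). *)
Definition is_pow2m1 (n : nat) : bool := [exists k : 'I_n.+2, n.+1 == (2 ^ k)%N].

Definition PolyN (N : nat) := {mpoly rat[N]}.

(* a_m = x_m if m = 2^k - 1 (and m < N so that x_m is available), else 0. *)
Definition aseq (N m : nat) : {mpoly rat[N]} :=
  if is_pow2m1 m then
    (match insub m : option 'I_N with Some i => 'X_i | None => 0 end)
  else 0.

Definition Dhank (N n : nat) : {mpoly rat[N]} :=
  \det (\matrix_(i < n, j < n) aseq N (i + j + 1)).

Definition Tq (N n : nat) : {fraction {mpoly rat[N]}} :=
  (tofrac (Dhank N n) * tofrac (Dhank N n.+2)) / (tofrac (Dhank N n.+1) ^+ 2).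

(* Main.v *)
Require Import Defs.
From HB Require Import structures.
From mathcomp Require Import all_boot all_order all_algebra.
From mathcomp Require Import fraction.
From mathcomp Require Import mpoly.
From mathcomp Require Import fingroup perm zify ring.
Import GRing.Theory.
Local Open Scope ring_scope.


Lemma pow2_eq m e : (2^m < 2 * 2^e)%N -> (2^e < 2 * 2^m)%N -> e = m.
Proof.
rewrite -!expnS !ltn_exp2l // => h1 h2; lia.
Qed.

Lemma comb q L m (s : {perm 'I_(q+L)}) : (0<L)%N -> (2*q+L+1 = 2^m)%N ->
  (forall i : 'I_(q+L), exists e, (i + s i + 2 = 2^e)%N) ->
  forall i : 'I_(q+L), (q <= i)%N -> (i + s i = 2*q+L-1)%N.
Proof.
move=> L0 hm hs.
have key : forall u v : 'I_(q+L), (exists e, (u + v + 2 = 2^e)%N) ->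
    (2^m < 2*(u+v+2))%N -> (u + v + 2 = 2^m)%N.
  move=> u v [e he] h. have hu := ltn_ord u. have hv := ltn_ord v.
  rewrite he in h *; congr (expn 2 _); apply: pow2_eq => //; lia.
move=> i qi.
have hi0 := ltn_ord i.
case: (leqP (2*i+4) (2*q+L+1)) => hi; last first.
  have := key i (s i) (hs i). have := ltn_ord (s i). lia.
have hj : (2*q+L-1-i < q+L)%N by lia.
pose j0 : 'I_(q+L) := Ordinal hj.
pose i' := ((s^-1)%g j0).
have := hs i'. rewrite /i' permKV => /key h.
have h2 : (i' + j0 + 2 = 2 ^ m)%N by apply: h; rewrite /= ; lia.
have ei : i' = i by apply/val_inj => /=; move: h2; rewrite /=; lia.
have : s i' = j0 by rewrite /i' permKV.
rewrite ei => ->. rewrite /=. lia.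
Qed.

Set Implicit Arguments. Unset Strict Implicit.

Definition anti (R : comNzRingType) L (c : R) : 'M[R]_L :=
  \matrix_(i < L, j < L) if ((i + j).+1 == L)%N then c else 0.

Lemma det_anti (R : comNzRingType) L (c : R) :
  \det (anti L c) = (-1)^+'C(L,2) * c^+L.
Proof.
elim: L => [|L IH]; first by rewrite det_mx00 bin0n expr0 expr0 mulr1.
rewrite (expand_det_row _ ord0) (bigD1 ord_max) //= big1; last first.
  move=> j hj; rewrite mxE /= add0n eqSS.
  have : (j != L :> nat) by apply: contra hj => /eqP h; apply/eqP/val_inj.
  by move/negbTE => ->; rewrite mul0r.
rewrite addr0 mxE /= add0n eqxx /cofactor /= add0n.
have -> : \det (row' ord0 (col' ord_max (anti L.+1 c))) = \det (anti L c).
  congr (\det _); apply/matrixP => i j; rewrite !mxE /=.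
  by rewrite /bump leq0n (leqNgt L j) (ltn_ord j) /= add1n add0n addSn eqSS.
rewrite IH binS bin1 exprD exprS. ring.
Qed.

Section Hank.
Variables (R : comNzRingType) (f : nat -> R).
Hypothesis hf : forall t, f t != 0 -> exists e, (t.+1 = 2^e)%N.
Definition H n : 'M[R]_n := \matrix_(i < n, j < n) f (i + j + 1)%N.

Lemma detH_rec q L m : (0<L)%N -> (2*q+L+1 = 2^m)%N ->
  \det (H (q+L)) = (-1)^+'C(L,2) * f (2^m).-1 ^+ L * \det (H q).
Proof.
move=> L0 hm.
set c := f (2^m).-1.
have -> : (-1)^+'C(L,2) * c^+L * \det (H q) = \det (block_mx (H q) 0 0 (anti L c)).
  by rewrite det_ublock det_anti mulrC.
set M := block_mx _ _ _ _.
have Ment : forall i j : 'I_(q+L), M i j =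
   if (i < q)%N && (j < q)%N then f (i + j + 1)%N
   else if [&& (q <= i)%N, (q <= j)%N & (i + j == 2*q+L-1)%N] then c else 0.
  move=> i j; rewrite /M /block_mx /col_mx /row_mx !mxE.
  case: (splitP i) => [i1 ->|i1 ->]; rewrite !mxE; case: (splitP j) => [j1 ->|j1 ->];
    rewrite !mxE /=.
  - by [].
  - by rewrite leqNgt (ltn_ord i1).
  - by rewrite leq_addr leqNgt (ltn_ord j1).
  - rewrite !leq_addr /=.
    have -> : (q + i1 + (q + j1) == 2 * q + L - 1)%N = ((i1 + j1).+1 == L)%N.
      by apply/eqP/eqP; lia.
    by [].
rewrite /determinant. apply: eq_bigr => s _; congr (_ * _).
have Lq : forall i : 'I_(q+L), (i < q+L)%N := fun i => ltn_ord i.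
case: (boolP [forall i : 'I_(q+L), (q <= i)%N ==> (i + s i == 2*q+L-1)%N]).
  move/forallP => ok; apply: eq_bigr => i _.
  rewrite Ment mxE.
  case: (leqP q i) => qi.
    have := ok i; rewrite qi /= => /eqP e.
    have -> : (q <= s i)%N by have := Lq i; lia.
    rewrite e eqxx /= ?ltnNge ?qi /=.
    by rewrite /c; congr f; lia.
  have -> : (s i < q)%N.
    rewrite ltnNge; apply/negP => qs.
    have hj : (2*q+L-1 - s i < q+L)%N by have := Lq (s i); lia.
    have := ok (Ordinal hj); rewrite /=.
    have -> : (q <= 2 * q + L - 1 - s i)%N by have := Lq (s i); lia.
    move=> /eqP e.
    have e2 : s (Ordinal hj) = s i by apply/val_inj => /=; move: e; have := Lq (s i); lia.
    have := perm_inj e2 => /(congr1 val) /=. have := Lq (s i); lia.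
  by [].
move/forallPn => [i0]; rewrite negb_imply => /andP [qi0 ne0].
have -> : \prod_i M i (s i) = 0.
  rewrite (bigD1 i0) //= Ment.
  rewrite ltnNge qi0 /= (negbTE ne0) !andbF.
  by rewrite mul0r.
case: (boolP [forall i : 'I_(q+L), H (q+L) i (s i) != 0]).
  move/forallP => nz.
  have := @comb q L m s L0 hm.
  have hs : forall i : 'I_(q+L), exists e, (i + s i + 2 = 2^e)%N.
    move=> i; have := nz i; rewrite mxE => /hf [e he]; exists e; lia.
  move=> /(_ hs i0 qi0) /eqP; by rewrite (negbTE ne0).
move/forallPn => [i1]; rewrite negbK => /eqP z.
by rewrite (bigD1 i1) //= z mul0r.
Qed.
End Hank.
Unset Implicit Arguments.


Lemma X_neq0 N (i : 'I_N) : ('X_i : {mpoly rat[N]}) != 0.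
Proof.
apply/eqP => H. have := mcoeffX rat U_(i) U_(i). rewrite H mcoeff0 eqxx => /eqP. by rewrite eq_sym oner_eq0.
Qed.

Lemma aseq_pow N t : aseq N t != 0 -> exists e, (t.+1 = 2^e)%N.
Proof.
rewrite /aseq; case: ifP => [/existsP [k /eqP ->] _|]; first by exists k.
by rewrite eqxx.
Qed.

Lemma aseq_neq0 N m : ((2^m).-1 < N)%N -> aseq N (2^m).-1 != 0.
Proof.
move=> hN; rewrite /aseq.
have -> : is_pow2m1 (2^m).-1.
  apply/existsP.
  have hm : (m < ((2^m).-1).+2)%N by rewrite prednK ?expn_gt0 // ltnS ltnW // ltn_expl.
  exists (Ordinal hm) => /=. by rewrite prednK ?expn_gt0.
by rewrite insubT X_neq0.
Qed.

Lemma Dhank_rec N q L m : (0<L)%N -> (2*q+L+1 = 2^m)%N ->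
  Dhank N (q+L) = (-1)^+'C(L,2) * aseq N (2^m).-1 ^+ L * Dhank N q.
Proof. move=> L0 hm; exact: (detH_rec (@aseq_pow N) L0 hm). Qed.

Lemma Dhank_neq0 N n : (2*n <= N)%N -> Dhank N n != 0.
Proof.
have [b] := ubnP n; elim: b n => [//|b IH] n nb hn.
case: n nb hn => [|n] nb hn.
  by rewrite /Dhank det_mx00 oner_neq0.
set t := trunc_log 2 n.+1.
have h1 : (2 ^ t <= n.+1)%N by apply: trunc_logP.
have h2 : (n.+1 < 2 ^ t.+1)%N by apply: trunc_log_ltn.
move: h1 h2; rewrite expnS => h1 h2.
have e : n.+1 = ((2 * 2 ^ t - 1 - n.+1) + (n.+1 - (2 * 2 ^ t - 1 - n.+1)))%N by lia.
rewrite e (@Dhank_rec N _ _ t.+1); last 2 first.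
- lia.
- rewrite expnS; lia.
rewrite !mulf_neq0 //.
- by rewrite signr_eq0.
- apply: expf_neq0; apply: aseq_neq0; rewrite expnS; lia.
- apply: IH; lia.
Qed.


Lemma sgnC2 (R : pzRingType) L : (-1)^+'C(L+2,2) = - (-1)^+'C(L,2) :> R.
Proof.
rewrite addn2 binS binS !bin1 -signr_odd -(signr_odd _ 'C(L,2)) !oddD /=.
by case: (odd 'C(L,2)); case: (odd L); rewrite /= ?expr0 ?expr1 ?opprK.
Qed.

Lemma Dfrac_rec N q L m : (0<L)%N -> (2*q+L+1 = 2^m)%N ->
  tofrac (Dhank N (q+L)) = (-1)^+'C(L,2) * (tofrac (aseq N (2^m).-1)) ^+ L * tofrac (Dhank N q).
Proof.
move=> L0 hm; rewrite (Dhank_rec N q L m L0 hm) !rmorphM rmorphXn /=.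
by rewrite !rmorphXn rmorphN1.
Qed.

Lemma alg1 (F : fieldType) (Y D0 D1 : F) : Y != 0 -> D1 != 0 ->
  D1 * ((-1)^+3 * Y^+3 * D0) / (1*Y*D1)^+2 = - (D0 * (1*Y*D1) / D1^+2).
Proof. move=> Y0 D10; field. by rewrite D10 Y0. Qed.

Lemma Tbase N k : (1 <= k)%N -> (2*(2^k+1) <= N)%N ->
  Tq N (2^k - 2 + 1) = - Tq N (2^k - 2 + 0).
Proof.
move=> k1 hN.
have p2 : (2 <= 2^k)%N by rewrite -{1}(expn1 2) leq_exp2l.
set b := (2^k - 2)%N.
have e3 : ((b+1).+2 = b + 3)%N by lia.
have e2 : ((b+1).+1 = (b+1) + 1)%N by lia.
have e2' : (b.+2 = (b+1) + 1)%N by lia.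
have e1 : (b.+1 = (b+1))%N by lia.
rewrite /Tq addn0 e3 e2 e2' e1.
have hm3 : (2*b+3+1 = 2^k.+1)%N by rewrite expnS; lia.
have hm1 : (2*(b+1)+1+1 = 2^k.+1)%N by rewrite expnS; lia.
rewrite (Dfrac_rec N b 3 k.+1 isT hm3) (Dfrac_rec N (b+1) 1 k.+1 isT hm1).
have Y0 : tofrac (aseq N (2 ^ k.+1).-1) != 0.
  rewrite tofrac_eq0; apply: aseq_neq0; rewrite expnS; lia.
have D1 : tofrac (Dhank N (b+1)) != 0.
  rewrite tofrac_eq0; apply: Dhank_neq0; lia.
have -> : 'C(3,2) = 3%N by [].
have -> : 'C(1,2) = 0%N by [].
move: Y0 D1.
set Y := tofrac _. set D1 := tofrac (Dhank N (b+1)). set D0 := tofrac (Dhank N b).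
move=> Y0 D10.
rewrite !expr0 !expr1. clearbody Y D1 D0. by apply: alg1.

Qed.


Lemma alg2 (F : fieldType) (s Y Z D0 D1 D2 : F) : s != 0 -> Y != 0 -> Z != 0 -> D1 != 0 ->
 s * Z * D0 * (s * (Z * Y^+2 * Y^+2) * D2) / (- s * (Z * Y^+2) * D1)^+2 = D2 * D0 / D1^+2.
Proof. move=> s0 Y0 Z0 D10; field. by rewrite D10 Y0 Z0 oppr_eq0 s0. Qed.

Lemma Trefl N k n j : (1 <= k)%N -> (j <= 1)%N -> (0 < n)%N ->
  (2*(2^k.+1*n + 2^k + 1) <= N)%N ->
  exists n2, [/\ (n2 < n)%N, odd (n + n2) &
    Tq N (2^k.+1 * n + 2^k - 2 + j) = Tq N (2^k.+1 * n2 + 2^k - 2 + (1-j))].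
Proof.
move=> k1 j1 n0 hN.
set t := trunc_log 2 n.
have h1 : (2 ^ t <= n)%N by apply: trunc_logP.
have h2 : (n < 2 * 2 ^ t)%N by rewrite -expnS; apply: trunc_log_ltn.
exists (2 * 2 ^ t - 1 - n)%N.
split.
- lia.
- have -> : (n + (2 * 2 ^ t - 1 - n) = (2 * (2 ^ t - 1)).+1)%N by lia.
  by rewrite oddS oddM.
set n2 := (2 * 2 ^ t - 1 - n)%N.
have P2 : (2 <= 2^k)%N by rewrite -{1}(expn1 2) leq_exp2l.
set P := (2^k)%N.
have KP : (2^k.+1 = 2 * P)%N by rewrite expnS.
have hm : (2^(k.+1 + t.+1) = 2 * (2^k.+1 * 2 ^ t))%N by rewrite expnD [(2 ^ t.+1)%N]expnS mulnCA.
have hX : (2^k.+1 * 2 ^ t <= 2^k.+1 * n)%N by rewrite leq_mul2l h1 orbT.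
have hXY : (2^k.+1 * n + 2^k.+1 * n2 + 2^k.+1 = 2 * (2^k.+1 * 2 ^ t))%N.
  rewrite -{3}(muln1 (2^k.+1)%N) -!mulnDr mulnCA; congr (_ * _)%N; rewrite /n2; lia.
set A0 := (2^k.+1 * n + P - 2 + j)%N.
set B2 := (2^k.+1 * n2 + P - 2 + (1-j))%N.
set L := (A0 - B2.+2)%N.
have hA : (A0 + B2 + 3 = 2 * (2^k.+1 * 2 ^ t))%N by rewrite /A0 /B2; lia.
have hL : (B2.+2 < A0)%N by rewrite /A0 /B2; lia.
have L0 : (0 < L)%N by rewrite /L; lia.
have e0 : A0 = (B2.+2 + L)%N by rewrite /L; lia.
have e1 : A0.+1 = (B2.+1 + (L+2))%N by rewrite /L; lia.
have e2 : A0.+2 = (B2 + (L+2+2))%N by rewrite /L; lia.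
have hm0 : (2*B2.+2 + L + 1 = 2^(k.+1 + t.+1))%N by rewrite hm /L; lia.
have hm1 : (2*B2.+1 + (L+2) + 1 = 2^(k.+1 + t.+1))%N by rewrite hm /L; lia.
have hm2 : (2*B2 + (L+2+2) + 1 = 2^(k.+1 + t.+1))%N by rewrite hm /L; lia.
rewrite /Tq e2 e1 e0.
have L1 : (0 < L+2)%N by lia.
have L2 : (0 < L+2+2)%N by lia.
rewrite (Dfrac_rec N _ _ _ L0 hm0) (Dfrac_rec N _ _ _ L1 hm1) (Dfrac_rec N _ _ _ L2 hm2).
rewrite (sgnC2 _ (L+2)) (sgnC2 _ L) opprK !exprD.
have Y0 : tofrac (aseq N (2 ^ (k.+1 + t.+1)).-1) != 0.
  rewrite tofrac_eq0; apply: aseq_neq0. rewrite hm; lia.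
have D1 : tofrac (Dhank N B2.+1) != 0.
  rewrite tofrac_eq0; apply: Dhank_neq0. rewrite /B2; lia.
move: Y0 D1.
set Y := tofrac _. set D1 := tofrac (Dhank N B2.+1).
set D0 := tofrac (Dhank N B2.+2). set D2 := tofrac (Dhank N B2).
set s := (-1) ^+ _.
have s0 : s != 0 by rewrite signr_eq0.
move=> Y0 D10. clearbody Y D0 D1 D2 s.
exact: (@alg2 _ _ _ _ _ _ _ s0 Y0 (expf_neq0 L Y0) D10).
Qed.


Theorem theorem5p6 (k n j N : nat) :
  (1 <= k)%N -> (j <= 1)%N -> (2 ^ k.+2 * n.+1 <= N)%N ->
  Tq N (2 ^ k.+1 * n + 2 ^ k - 2 + j)%N = (-1) ^+ n * Tq N (2 ^ k - 2 + j)%N.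
Proof.
move=> k1.
have P2 : (2 <= 2^k)%N by rewrite -{1}(expn1 2) leq_exp2l.
have hb : forall j, (j <= 1)%N -> (2 ^ k.+2 <= N)%N ->
    Tq N (2^k - 2 + (1 - j)) = - Tq N (2^k - 2 + j).
  move=> j' j'1 hN.
  have hN' : (2 * (2 ^ k + 1) <= N)%N by move: hN; rewrite !expnS; lia.
  have := Tbase N k k1 hN'.
  case: j' j'1 => [|[|//]] _ /=; first by [].
  by rewrite subnn => ->; rewrite opprK.
have [b] := ubnP n; elim: b n j => // b IH n j nb j1 hN.
have hN0 : (2 ^ k.+2 <= N)%N.
  by apply: leq_trans hN; rewrite leq_pmulr.
case: n nb hN => [|n] nb hN.
  by rewrite muln0 add0n expr0 mul1r.
have hN' : (2 * (2 ^ k.+1 * n.+1 + 2 ^ k + 1) <= N)%N.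
  move: hN P2; rewrite !expnS; lia.
have [n2 [n2n odd2 ->]] := Trefl N k n.+1 j k1 j1 (ltn0Sn n) hN'.
rewrite IH; last 3 first.
- lia.
- by rewrite leq_subr.
- apply: leq_trans hN; rewrite leq_mul2l; apply/orP; right; lia.
rewrite hb // mulrN -signr_odd -[in RHS]signr_odd.
move: odd2; rewrite oddD.
set a := odd n.+1; set c := odd n2.
case: a; case: c => //= _; by rewrite ?expr0 ?expr1 ?mulN1r ?mul1r ?opprK.
Qed.
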